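(* Fix $a\ge0$. For every $x\ge0$ and $\varepsilon>0$, almost surely: (i) $t\mapsto R^{(x+\varepsilon)}(t)-R^{(x)}(t)$ is non-increasing on $[0,\infty)$ and takes values in $[-\varepsilon,0]$; (ii) $t\mapsto U^{(x+\varepsilon)}(t)-U^{(x)}(t)$ is non-increasing on $[0,\infty)$ and takes values in $[0,\varepsilon]$; (iii) $t\mapsto L^{(x+\varepsilon)}(t)-L^{(x)}(t)$ is non-decreasing on $[0,\infty)$ and takes values in $[0,\varepsilon]$.
   Context: $X$ is a real-valued Lévy process with $X(0)=0$ under $\mathbb{P}$; $N_r$ is an independent Poisson process of rate $r>0$ with arrival times $0<T_1<T_2<\cdots$, $T_0:=0$. For $y\ge0$ let $X^{(y)}:=X+y$. Given $a\ge0$, $(U^{(y)},L^{(y)},R^{(y)})$ denotes the periodic-classical barrier strategy at $a$ driven by $X^{(y)}$, constructed recursively: $U^{(y)}=X^{(y)}-L^{(y)}+R^{(y)}$; $L^{(y)}(0)=0$ and $L^{(y)}$ is constant on each $[T_k,T_{k+1})$; on $[T_k,T_{k+1})$, with $Y(t):=U^{(y)}(T_k)+X(t)-X(T_k)$ (where $U^{(y)}(T_0):=y$), $R^{(y)}(t)=R^{(y)}(T_k)+\max\{0,\sup_{s\in[T_k,t]}(-Y(s))\}$ (with $R^{(y)}(T_0):=0$) and $U^{(y)}(t)=Y(t)+R^{(y)}(t)-R^{(y)}(T_k)$; at $T_{k+1}$, $L^{(y)}$ jumps by $(U^{(y)}(T_{k+1}-)-a)^+$ and $U^{(y)}(T_{k+1})=\min\{U^{(y)}(T_{k+1}-),a\}$.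 Thus $R^{(y)}$ is the cumulative capital injection (classical reflection at $0$) and $L^{(y)}$ the cumulative periodic dividend (reflection at $a$ at Poisson times). *)

(* Defs.v *)
From HB Require Import structures.
From mathcomp Require Import all_boot all_order all_algebra.
From mathcomp Require Import all_classical all_reals all_analysis.
Set Implicit Arguments. Unset Strict Implicit. Unset Printing Implicit Defensive.
Import Order.TTheory GRing.Theory Num.Theory.
Import numFieldNormedType.Exports.
Local Open Scope classical_set_scope.
Local Open Scope ring_scope.

(* Periodic-classical barrier strategy at level a, driven by the path  *)
(* y + x(.) , with Poisson observation times T 0 = 0 < T 1 < T 2 < ...   *)
Section Strategy.
Variables (R : realType) (x : R -> R) (T : nat -> R) (a y : R).

(* Y on [T k, T (k+1)) given the post-dividend value u = U(T k) *)
Definition pcY (u : R) (k : nat) (s : R) : R := u + x s - x (T k).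

(* amount of capital injected on [T k, t]: max{0, sup_{s in [T k,t]} -Y(s)} *)
Definition pcInj (u : R) (k : nat) (t : R) : R :=
  Num.max 0 (sup ((fun s => - pcY u k s) @` [set` `[T k, t]])).

(* state at the observation times: (U(T k), R(T k), L(T k)) *)
Fixpoint pcState (k : nat) : R * R * R :=
  match k with
  | 0%N => (y, 0, 0)
  | k'.+1 =>
      let: (u, r, l) := pcState k' in
      let m := pcInj u k' (T k) in
      let pre := pcY u k' (T k) + m in      (* U(T k -) *)
      (Num.min pre a, r + m, l + Num.max (pre - a) 0)
  end.

Definition pcIdx (t : R) : nat := xget 0%N [set k | T k <= t < T k.+1].

Definition pcU (t : R) : R :=
  let k := pcIdx t in let: (u, _, _) := pcState k in
  pcY u k t + pcInj u k t.

Definition pcR (t : R) : R :=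
  let k := pcIdx t in let: (u, r, _) := pcState k in
  r + pcInj u k t.

Definition pcL (t : R) : R :=
  let k := pcIdx t in let: (_, _, l) := pcState k in l.

End Strategy.

Local Open Scope ereal_scope.

Definition is_levy {d} {Omega : measurableType d} {R : realType}
  (P : probability Omega R) (X : Omega -> R -> R) : Prop :=
  (forall w, X w 0%R = 0%R) /\
      (forall t, measurable_fun setT (fun w => X w t)) /\
      (forall w t, (X w s @[s --> at_right t] --> X w t)
                   /\ cvg (X w s @[s --> at_left t])) /\
      (forall (n : nat) (ts : nat -> R) (B : nat -> set R),
         (0 <= ts 0%N)%R -> (forall i, (i < n)%N -> (ts i <= ts i.+1)%R) ->
         (forall i, measurable (B i)) ->
         P [set w | forall i, (i < n)%N -> (X w (ts i.+1) - X w (ts i))%R \in B i]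
         = \prod_(i < n) P [set w | (X w (ts i.+1) - X w (ts i))%R \in B i]) /\
      (forall (s t : R) (B : set R), (0 <= s)%R -> (s <= t)%R -> measurable B ->
         P [set w | (X w t - X w s)%R \in B] = P [set w | X w (t - s)%R \in B]) /\
      (forall (t e : R), (0 <= t)%R -> (0 < e)%R ->
         (P [set w | (e < `|X w s - X w t|)%R]) @[s --> t] --> 0).

Definition is_poisson {d} {Omega : measurableType d} {R : realType}
  (P : probability Omega R) (r : R) (N : Omega -> R -> nat)
  (T : Omega -> nat -> R) : Prop :=
  (forall w, T w 0%N = 0%R) /\
      (forall w k, (T w k < T w k.+1)%R) /\
      (forall w (M : R), exists k, (M < T w k)%R) /\
      (forall w t k, (0 <= t)%R -> (N w t = k <-> (T w k <= t < T w k.+1)%R)) /\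
      (forall t k, measurable [set w | N w t = k]) /\
      (forall (n : nat) (ts : nat -> R) (ks : nat -> nat),
         (0 <= ts 0%N)%R -> (forall i, (i < n)%N -> (ts i <= ts i.+1)%R) ->
         P [set w | forall i, (i < n)%N -> (N w (ts i.+1) - N w (ts i))%N = ks i]
         = \prod_(i < n) P [set w | (N w (ts i.+1) - N w (ts i))%N = ks i]) /\
      (forall (s t : R) (k : nat), (0 <= s)%R -> (s <= t)%R ->
         P [set w | (N w t - N w s)%N = k]
         = (expR (- (r * (t - s))) * (r * (t - s)) ^+ k / (k`!)%:R)%:E).

Definition indep_XN {d} {Omega : measurableType d} {R : realType}
  (P : probability Omega R) (X : Omega -> R -> R) (N : Omega -> R -> nat) : Prop :=
  forall (n m : nat) (ss : nat -> R) (B : nat -> set R) (ts : nat -> R)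
         (ks : nat -> nat),
    (forall i, measurable (B i)) ->
    (forall i, (0 <= ss i)%R) -> (forall j, (0 <= ts j)%R) ->
    P ([set w | forall i, (i < n)%N -> X w (ss i) \in B i]
        `&` [set w | forall j, (j < m)%N -> N w (ts j) = ks j])
    = P [set w | forall i, (i < n)%N -> X w (ss i) \in B i]
      * P [set w | forall j, (j < m)%N -> N w (ts j) = ks j].

(* Main.v *)
Require Import Defs.
From HB Require Import structures.
From mathcomp Require Import all_boot all_order all_algebra.
From mathcomp Require Import all_classical all_reals all_analysis.
From mathcomp Require Import lra.
Import Order.TTheory GRing.Theory Num.Theory.
Import numFieldNormedType.Exports.
Local Open Scope classical_set_scope.
Local Open Scope ring_scope.

Set Implicit Arguments. Unset Strict Implicit.

Section Arith.
Variable R : realType.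

Lemma maxr_cases (p q : R) : (Num.max p q = q /\ p <= q) \/ (Num.max p q = p /\ q <= p).
Proof. case: (leP p q) => h; [left | right]; split => //; exact: ltW. Qed.

Lemma minr_cases (p q : R) : (Num.min p q = p /\ p <= q) \/ (Num.min p q = q /\ q <= p).
Proof. case: (leP p q) => h; [left | right]; split => //; exact: ltW. Qed.

Ltac elim_mm := repeat match goal with
 | |- context [Num.max ?p ?q] => let H := fresh in have [[-> H]|[-> H]] := maxr_cases p q
 | |- context [Num.min ?p ?q] => let H := fresh in have [[-> H]|[-> H]] := minr_cases p q
 end.

Lemma h_bounds (u u' M : R) : u' <= u ->
  - (u - u') <= Num.max 0 (M - u) - Num.max 0 (M - u') <= 0.
Proof. move=> h; elim_mm; apply/andP; split; lra. Qed.

Lemma h_mono (u u' M1 M2 : R) : u' <= u -> M1 <= M2 ->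
  Num.max 0 (M2 - u) - Num.max 0 (M2 - u') <= Num.max 0 (M1 - u) - Num.max 0 (M1 - u').
Proof. move=> h h2; elim_mm; lra. Qed.

Lemma max0_ge (M u : R) : M - u <= Num.max 0 (M - u).
Proof. elim_mm; lra. Qed.

Lemma mm_arith (p p' a : R) : 0 <= a -> 0 <= p' -> p' <= p ->
  [/\ 0 <= Num.min p' a, Num.min p' a <= Num.min p a,
   Num.min p a - Num.min p' a <= p - p',
   Num.max (p' - a) 0 <= Num.max (p - a) 0 &
   (Num.min p a - Num.min p' a) + (Num.max (p - a) 0 - Num.max (p' - a) 0) = p - p'].
Proof. move=> ha hp' hp; elim_mm; split; lra. Qed.

Lemma sup_shift (g : R -> R) (I : set R) (c : R) : I !=set0 -> has_ubound (g @` I) ->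
  sup ((fun s => g s + c) @` I) = sup (g @` I) + c.
Proof.
move=> [s0 Is0] hub.
have ne : (g @` I) !=set0 by exists (g s0), s0.
have hs : has_sup (g @` I) by split.
have ne2 : ((fun s => g s + c) @` I) !=set0 by exists (g s0 + c), s0.
have hs2 : has_sup ((fun s => g s + c) @` I).
  split => //; exists (sup (g @` I) + c) => _ [s Is <-].
  by rewrite lerD2r; apply: sup_upper_bound => //; exists s.
apply/le_anti/andP; split.
- apply: ge_sup => // _ [s Is <-].
  by rewrite lerD2r; apply: sup_upper_bound => //; exists s.
- rewrite -lerBrDr; apply: ge_sup => // _ [s Is <-].
  by rewrite lerBrDr; apply: sup_upper_bound => //; exists s.
Qed.

Lemma nonincr_nat (f : nat -> R) : (forall k, f k.+1 <= f k) ->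
  forall j k, (j <= k)%N -> f k <= f j.
Proof.
move=> hf j k /subnKC <-; elim: (k - j)%N => [|d IH]; first by rewrite addn0.
by rewrite addnS; apply: le_trans IH.
Qed.

End Arith.

Lemma loc_bounded (R : realType) (f : R -> R) (t : R) :
  (f s @[s --> at_right t] --> f t) -> cvg (f s @[s --> at_left t]) ->
  exists B, \forall s \near t, `|f s| <= B.
Proof.
move=> hr hl.
set l := lim (f s @[s --> at_left t]).
have hr1 : \forall s \near at_right t, `|f t - f s| < 1.
  exact: cvgr_dist_lt.
have hl1 : \forall s \near at_left t, `|l - f s| < 1.
  exact: cvgr_dist_lt.
exists (Num.max (`|f t| + 1) (`|l| + 1)).
have hr2 : \forall s \near t, t < s -> `|f t - f s| < 1 := hr1.
have hl2 : \forall s \near t, s < t -> `|l - f s| < 1 := hl1.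
near=> s.
have [st|ts|->] := ltgtP s t.
- have h : `|l - f s| < 1 by move: st; near: s; exact: hl2.
  rewrite le_max; apply/orP; right.
  have h2 : `|f s| <= `|f s - l| + `|l| by rewrite -{1}(subrK l (f s)) ler_normD.
  rewrite distrC in h; lra.
- have h : `|f t - f s| < 1 by move: ts; near: s; exact: hr2.
  rewrite le_max; apply/orP; left.
  have h2 : `|f s| <= `|f s - f t| + `|f t| by rewrite -{1}(subrK (f t) (f s)) ler_normD.
  rewrite distrC in h; lra.
- by rewrite le_max lerDl ler01.
Unshelve. all: end_near.
Qed.

Lemma cadlag_bounded (R : realType) (f : R -> R) :
  (forall t, (f s @[s --> at_right t] --> f t) /\ cvg (f s @[s --> at_left t])) ->
  forall a b, exists B, forall s, a <= s <= b -> `|f s| <= B.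
Proof.
move=> hf a b.
have cK := @segment_compact R a b.
move/compact_near_coveringP: cK => cK.
have := cK R (pinfty_nbhs R) (fun M s => `|f s| <= M) _.
case.
  move=> s _.
  have [B HB] := @loc_bounded _ _ _ (proj1 (hf s)) (proj2 (hf s)).
  have hB : \forall M \near +oo, B <= M by apply: nbhs_pinfty_ge; exact: num_real.
  near=> s' M.
  apply: (le_trans (_ : `|f s'| <= B)); first by near: s'.
  by rewrite /=; near: M.
move=> M0 [_ HM].
exists (M0 + 1) => s hs; apply: (HM (M0 + 1)); first lra.
by rewrite /= in_itv /=.
Unshelve. all: end_near.
Qed.

Section Main.
Variables (R : realType) (x : R -> R) (T : nat -> R) (a : R).
Hypotheses (T0 : T 0%N = 0) (Tinc : forall k, T k < T k.+1)
  (Tunb : forall M, exists k, M < T k)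
  (xbnd : forall c d, exists B, forall s, c <= s <= d -> `|x s| <= B) (a0 : 0 <= a).

Lemma Tlt j k : (j < k)%N -> T j < T k.
Proof.
move=> /subnKC <-; elim: (k - j.+1)%N => [|d IH]; first by rewrite addn0.
by rewrite addnS; apply: lt_trans IH _.
Qed.

Lemma Tle j k : (j <= k)%N -> T j <= T k.
Proof. by rewrite leq_eqVlt => /orP [/eqP -> //| /(@Tlt j k) /ltW]. Qed.

Lemma idxP t : 0 <= t -> T (pcIdx T t) <= t < T (pcIdx T t).+1.
Proof.
move=> t0; rewrite /pcIdx; apply: (@xgetPex _ 0%N [set k | T k <= t < T k.+1]).
have [k0 hk0] := Tunb t.
have exP : exists n, (t < T n) by exists k0.
case: (ex_minnP exP) => n hn hmin.
case: n hn hmin => [|n] hn hmin; first by move: hn t0; rewrite T0; lra.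
exists n => /=; rewrite hn andbT.
by rewrite leNgt; apply/negP => /hmin; rewrite ltnn.
Qed.

Lemma idx_le s t j k : T j <= s < T j.+1 -> T k <= t < T k.+1 -> s <= t -> (j <= k)%N.
Proof.
move=> /andP [hj1 hj2] /andP [hk1 hk2] st.
rewrite leqNgt; apply/negP => kj.
have := @Tle k.+1 j kj; lra.
Qed.

Definition Mk k t := sup ((fun s => - (x s - x (T k))) @` [set` `[T k, t]]).

Lemma hasub k t : has_ubound ((fun s => - (x s - x (T k))) @` [set` `[T k, t]]).
Proof.
have [B hB] := xbnd (T k) t.
exists (B + `|x (T k)|) => _ [s hs <-].
have h1 := hB s; rewrite /= in_itv /= in hs; have h2 := h1 hs.
have h3 : - x s <= `|x s| by rewrite -normrN ler_norm.
have h4 : x (T k) <= `|x (T k)| by rewrite ler_norm.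
lra.
Qed.

Lemma hassup k t : T k <= t -> has_sup ((fun s => - (x s - x (T k))) @` [set` `[T k, t]]).
Proof.
move=> h; split; last exact: hasub.
by exists (- (x (T k) - x (T k))), (T k) => //=; rewrite in_itv /= lexx.
Qed.

Lemma Mk_ub k t s : T k <= s <= t -> - (x s - x (T k)) <= Mk k t.
Proof.
move=> h; apply: sup_upper_bound; first by apply: hassup; lra.
by exists s => //=; rewrite in_itv.
Qed.

Lemma Mk_mono k t1 t2 : T k <= t1 -> t1 <= t2 -> Mk k t1 <= Mk k t2.
Proof.
move=> h1 h2; apply: ge_sup; first exact: (proj1 (hassup h1)).
move=> _ [s hs <-]; apply: Mk_ub; move: hs; rewrite /= in_itv /=; lra.
Qed.

Lemma Mk0 k : Mk k (T k) = 0.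
Proof.
apply/le_anti/andP; split.
- apply: ge_sup; first exact: (proj1 (hassup (lexx (T k)))).
  move=> _ [s hs <-]; move: hs; rewrite /= in_itv /= => hs.
  have -> : s = T k by apply/le_anti; rewrite andbC.
  by rewrite subrr oppr0.
- have h := @Mk_ub k (T k) (T k); rewrite lexx in h.
  by have := h isT; rewrite subrr oppr0.
Qed.

Lemma injE u k t : T k <= t -> pcInj x T u k t = Num.max 0 (Mk k t - u).
Proof.
move=> h; rewrite /pcInj /Mk; congr (Num.max 0 _).
rewrite -sup_shift; last exact: hasub.
  congr sup; congr image; apply: boolp.funext => s; rewrite /pcY; lra.
by exists (T k); rewrite /= in_itv /= lexx.
Qed.


Definition U y k := (pcState x T a y k).1.1.
Definition RR y k := (pcState x T a y k).1.2.
Definition LL y k := (pcState x T a y k).2.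

Definition pre y k := U y k + (x (T k.+1) - x (T k)) + Num.max 0 (Mk k (T k.+1) - U y k).

Lemma stS y k : pcState x T a y k.+1 =
  (Num.min (pcY x T (U y k) k (T k.+1) + pcInj x T (U y k) k (T k.+1)) a,
   RR y k + pcInj x T (U y k) k (T k.+1),
   LL y k + Num.max (pcY x T (U y k) k (T k.+1) + pcInj x T (U y k) k (T k.+1) - a) 0).
Proof. by rewrite /U /RR /LL /=; case: (pcState x T a y k) => [[u r] l]. Qed.

Lemma preE y k : pcY x T (U y k) k (T k.+1) + pcInj x T (U y k) k (T k.+1) = pre y k.
Proof. by rewrite injE ?(ltW (Tinc k)) // /pre /pcY; lra. Qed.

Lemma US y k : U y k.+1 = Num.min (pre y k) a.
Proof. by rewrite {1}/U stS preE. Qed.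

Lemma RS y k : RR y k.+1 = RR y k + Num.max 0 (Mk k (T k.+1) - U y k).
Proof. by rewrite {1}/RR stS /= injE ?(ltW (Tinc k)). Qed.

Lemma LS y k : LL y k.+1 = LL y k + Num.max (pre y k - a) 0.
Proof. by rewrite {1}/LL stS /= preE. Qed.

Lemma U0 y : U y 0 = y. Proof. by []. Qed.
Lemma RR0 y : RR y 0 = 0. Proof. by []. Qed.
Lemma LL0 y : LL y 0 = 0. Proof. by []. Qed.

Lemma pre_ge0 y k : 0 <= pre y k.
Proof.
have h1 := max0_ge (Mk k (T k.+1)) (U y k).
have h2 : - (x (T k.+1) - x (T k)) <= Mk k (T k.+1).
  by apply: Mk_ub; rewrite lexx andbT; apply: ltW.
rewrite /pre; lra.
Qed.

Lemma U_ge0 y k : 0 <= y -> 0 <= U y k.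
Proof.
case: k => [|k] // _.
by rewrite US; have [] := mm_arith a0 (pre_ge0 y k) (lexx (pre y k)).
Qed.


Lemma pcR_E y t : 0 <= t ->
  pcR x T a y t = RR y (pcIdx T t) + Num.max 0 (Mk (pcIdx T t) t - U y (pcIdx T t)).
Proof.
move=> t0; have /andP [h1 _] := idxP t0.
rewrite /pcR /RR /U -(injE _ h1) /=.
by case: (pcState x T a y (pcIdx T t)) => [[u r] l].
Qed.

Lemma pcU_E y t : 0 <= t ->
  pcU x T a y t = U y (pcIdx T t) + (x t - x (T (pcIdx T t)))
                  + Num.max 0 (Mk (pcIdx T t) t - U y (pcIdx T t)).
Proof.
move=> t0; have /andP [h1 _] := idxP t0.
rewrite /pcU /U -(injE _ h1) /=.
case: (pcState x T a y (pcIdx T t)) => [[u r] l] /=.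
rewrite /pcY; lra.
Qed.

Lemma pcL_E y t : pcL x T a y t = LL y (pcIdx T t).
Proof. by rewrite /pcL /LL; case: (pcState x T a y (pcIdx T t)) => [[u r] l]. Qed.

Section Diff.
Variables (y0 e : R).
Hypotheses (y00 : 0 <= y0) (e0 : 0 <= e).

Definition del k := U (y0 + e) k - U y0 k.
Definition dR k := RR (y0 + e) k - RR y0 k.
Definition dL k := LL (y0 + e) k - LL y0 k.
Definition g k t := Num.max 0 (Mk k t - U (y0 + e) k) - Num.max 0 (Mk k t - U y0 k).

Lemma del_ge0 k : U y0 k <= U (y0 + e) k.
Proof.
elim: k => [|k IH]; first by rewrite /U /= lerDl.
have hb := h_bounds (Mk k (T k.+1)) IH.
have hle : pre y0 k <= pre (y0 + e) k by rewrite /pre; lra.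
have [_ h2 _ _ _] := mm_arith a0 (pre_ge0 y0 k) hle.
by rewrite !US.
Qed.

Lemma g_bounds k t : - del k <= g k t <= 0.
Proof. exact: h_bounds _ (del_ge0 k). Qed.

Lemma g_mono k t1 t2 : T k <= t1 -> t1 <= t2 -> g k t2 <= g k t1.
Proof. move=> h1 h2; exact: h_mono (del_ge0 k) (Mk_mono h1 h2). Qed.

Lemma step k : [/\ dR k.+1 = dR k + g k (T k.+1), del k.+1 <= del k + g k (T k.+1),
  dL k <= dL k.+1 & del k.+1 + dL k.+1 - dR k.+1 = del k + dL k - dR k].
Proof.
have IH := del_ge0 k.
have hb := h_bounds (Mk k (T k.+1)) IH.
have hle : pre y0 k <= pre (y0 + e) k by rewrite /pre; lra.
have [_ _ h3 h4 h5] := mm_arith a0 (pre_ge0 y0 k) hle.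
move: h3 h4 h5; rewrite /dR /del /dL /g !RS !US !LS /pre => h3 h4 h5.
split; lra.
Qed.

Lemma conserv k : del k + dL k - dR k = e.
Proof.
elim: k => [|k IH]; first by rewrite /del /dL /dR /U /RR /LL /=; lra.
by have [_ _ _ ->] := step k.
Qed.

Lemma dR_noninc j k : (j <= k)%N -> dR k <= dR j.
Proof.
apply: nonincr_nat => n; have [-> _ _ _] := step n.
have := g_bounds n (T n.+1); lra.
Qed.

Lemma del_noninc j k : (j <= k)%N -> del k <= del j.
Proof.
apply: nonincr_nat => n; have [_ h _ _] := step n.
have := g_bounds n (T n.+1); lra.
Qed.

Lemma dL_nondec j k : (j <= k)%N -> dL j <= dL k.
Proof.
move=> h; rewrite -lerN2; apply: (nonincr_nat (f := fun n => - dL n)) h => n.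
have [_ _ h2 _] := step n; lra.
Qed.

Lemma dR_le0 k : dR k <= 0.
Proof. by have := dR_noninc (leq0n k); rewrite /dR /RR /=; lra. Qed.

Lemma dL_ge0 k : 0 <= dL k.
Proof. by have := dL_nondec (leq0n k); rewrite /dL /LL /=; lra. Qed.


Lemma DR_E t : 0 <= t -> pcR x T a (y0 + e) t - pcR x T a y0 t = dR (pcIdx T t) + g (pcIdx T t) t.
Proof. by move=> t0; rewrite !pcR_E // /dR /g; lra. Qed.

Lemma DU_E t : 0 <= t -> pcU x T a (y0 + e) t - pcU x T a y0 t = del (pcIdx T t) + g (pcIdx T t) t.
Proof. by move=> t0; rewrite !pcU_E // /del /g; lra. Qed.

Lemma DL_E t : pcL x T a (y0 + e) t - pcL x T a y0 t = dL (pcIdx T t).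
Proof. by rewrite !pcL_E. Qed.

Lemma idx_cases s t : 0 <= s -> s <= t ->
  let j := pcIdx T s in let k := pcIdx T t in
  [/\ T j <= s < T j.+1, T k <= t < T k.+1 & (j <= k)%N].
Proof.
move=> s0 st /=; have t0 : 0 <= t by apply: le_trans st.
have hs := idxP s0; have ht := idxP t0.
by split => //; apply: idx_le hs ht st.
Qed.

Lemma monoR s t : 0 <= s -> s <= t ->
  pcR x T a (y0 + e) t - pcR x T a y0 t <= pcR x T a (y0 + e) s - pcR x T a y0 s.
Proof.
move=> s0 st; have t0 : 0 <= t by apply: le_trans st.
rewrite DR_E // DR_E //.
have [/andP [hj1 hj2] /andP [hk1 hk2]] := idx_cases s0 st.
set j := pcIdx T s; set k := pcIdx T t.
rewrite leq_eqVlt => /orP [/eqP ejk | ljk].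
  rewrite -ejk; have := g_mono (k := j) hj1 st; lra.
have h1 := g_bounds k t.
have h2 := dR_noninc ljk.
have [h3 _ _ _] := step j.
have h4 := g_mono hj1 (ltW hj2).
lra.
Qed.

Lemma monoU s t : 0 <= s -> s <= t ->
  pcU x T a (y0 + e) t - pcU x T a y0 t <= pcU x T a (y0 + e) s - pcU x T a y0 s.
Proof.
move=> s0 st; have t0 : 0 <= t by apply: le_trans st.
rewrite DU_E // DU_E //.
have [/andP [hj1 hj2] /andP [hk1 hk2]] := idx_cases s0 st.
set j := pcIdx T s; set k := pcIdx T t.
rewrite leq_eqVlt => /orP [/eqP ejk | ljk].
  rewrite -ejk; have := g_mono (k := j) hj1 st; lra.
have h1 := g_bounds k t.
have h2 := del_noninc ljk.
have [_ h3 _ _] := step j.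
have h4 := g_mono hj1 (ltW hj2).
lra.
Qed.

Lemma monoL s t : 0 <= s -> s <= t ->
  pcL x T a (y0 + e) s - pcL x T a y0 s <= pcL x T a (y0 + e) t - pcL x T a y0 t.
Proof.
move=> s0 st; rewrite !DL_E.
have [_ _ h] := idx_cases s0 st.
exact: dL_nondec.
Qed.

Lemma rangeR t : 0 <= t -> - e <= pcR x T a (y0 + e) t - pcR x T a y0 t <= 0.
Proof.
move=> t0; rewrite DR_E //.
have := g_bounds (pcIdx T t) t; have := conserv (pcIdx T t);
have := dL_ge0 (pcIdx T t); have := dR_le0 (pcIdx T t).
move=> h1 h2 h3 /andP [h4 h5]; apply/andP; split; lra.
Qed.

Lemma rangeU t : 0 <= t -> 0 <= pcU x T a (y0 + e) t - pcU x T a y0 t <= e.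
Proof.
move=> t0; rewrite DU_E //.
have := g_bounds (pcIdx T t) t; have := conserv (pcIdx T t);
have := dL_ge0 (pcIdx T t); have := dR_le0 (pcIdx T t).
move=> h1 h2 h3 /andP [h4 h5]; apply/andP; split; lra.
Qed.

Lemma rangeL t : 0 <= pcL x T a (y0 + e) t - pcL x T a y0 t <= e.
Proof.
rewrite DL_E.
have := conserv (pcIdx T t); have := del_ge0 (pcIdx T t);
have := dL_ge0 (pcIdx T t); have := dR_le0 (pcIdx T t).
rewrite /del => h1 h2 h3 h4; apply/andP; split; lra.
Qed.

End Diff.

Lemma det (y0 eps : R) : 0 <= y0 -> 0 < eps ->
    let DR t := pcR x T a (y0 + eps) t - pcR x T a y0 t in
    let DU t := pcU x T a (y0 + eps) t - pcU x T a y0 t in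
    let DL t := pcL x T a (y0 + eps) t - pcL x T a y0 t in
    (forall s t, 0 <= s -> s <= t -> DR t <= DR s) /\
        (forall t, 0 <= t -> - eps <= DR t <= 0) /\
        (forall s t, 0 <= s -> s <= t -> DU t <= DU s) /\
        (forall t, 0 <= t -> 0 <= DU t <= eps) /\
        (forall s t, 0 <= s -> s <= t -> DL s <= DL t) /\
        (forall t, 0 <= t -> 0 <= DL t <= eps).
Proof.
move=> y00 /ltW e0 DR DU DL.
split; first by move=> s t; exact: monoR.
split; first by move=> t; exact: rangeR.
split; first by move=> s t; exact: monoU.
split; first by move=> t; exact: rangeU.
split; first by move=> s t; exact: monoL.
by move=> t _; exact: rangeL.
Qed.

End Main.

Unset Implicit Arguments. Set Strict Implicit.

Theorem mainTheorem3 {d} (Omega : measurableType d) (R : realType)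
  (P : probability Omega R) (X : Omega -> R -> R) (r : R)
  (N : Omega -> R -> nat) (T : Omega -> nat -> R) (a : R) :
  is_levy P X -> 0 < r -> is_poisson P r N T -> indep_XN P X N ->
  0 <= a ->
  forall x eps : R, 0 <= x -> 0 < eps ->
  {ae P, forall w,
    let DR t := pcR (X w) (T w) a (x + eps) t - pcR (X w) (T w) a x t in
    let DU t := pcU (X w) (T w) a (x + eps) t - pcU (X w) (T w) a x t in
    let DL t := pcL (X w) (T w) a (x + eps) t - pcL (X w) (T w) a x t in
    (forall s t, 0 <= s -> s <= t -> DR t <= DR s) /\
        (forall t, 0 <= t -> - eps <= DR t <= 0) /\
        (forall s t, 0 <= s -> s <= t -> DU t <= DU s) /\
        (forall t, 0 <= t -> 0 <= DU t <= eps) /\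
        (forall s t, 0 <= s -> s <= t -> DL s <= DL t) /\
        (forall t, 0 <= t -> 0 <= DL t <= eps)}.
Proof.
move=> hX hr hN hXN ha x0 eps hx heps.
apply: aeW => w.
have [_ [_ [hcad _]]] := hX.
have [T0 [Tinc [Tunb _]]] := hN.
exact: (det (T0 w) (Tinc w) (Tunb w) (cadlag_bounded (hcad w)) ha hx heps).
Qed.
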